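(* Let $A\subseteq\mathbb Z_+^2$ be finite and $k\ge0$ an integer. Then $$|\pi_x(A_{>k})|+|\pi_y(A_{>k})|\le\Big(1+\frac1{k+1}\Big)|A_{>k}|.$$
   Context: $\mathbb Z_+=\{0,1,2,\dots\}$. $\mathrm{row}(x,A)$ (resp. $\mathrm{col}(x,A)$) is the number of points of $A$ on the horizontal (resp. vertical) line through $x$ (counting $x$ itself if $x\in A$). $A_{>k}=\{x\in A:\mathrm{row}(x,A)>k\text{ or }\mathrm{col}(x,A)>k\}$. $\pi_x,\pi_y$ denote projections onto the horizontal and vertical axes. *)

(* Defs.v *)
From mathcomp Require Import all_boot all_order all_algebra.
Set Implicit Arguments. Unset Strict Implicit. Unset Printing Implicit Defensive.

(* A finite subset of Z_+^2 is represented by a duplicate-free list of pairs of nats. *)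
Definition row (x : nat * nat) (A : seq (nat * nat)) : nat :=
  count (fun p => p.2 == x.2) A.
Definition col (x : nat * nat) (A : seq (nat * nat)) : nat :=
  count (fun p => p.1 == x.1) A.
Definition A_gt (k : nat) (A : seq (nat * nat)) : seq (nat * nat) :=
  [seq x <- A | (k < row x A) || (k < col x A)].
Definition proj_x (A : seq (nat * nat)) : seq nat := undup (map fst A).
Definition proj_y (A : seq (nat * nat)) : seq nat := undup (map snd A).

(* Main.v *)
Require Import Defs.
From mathcomp Require Import all_boot all_order all_algebra.
From mathcomp Require Import zify ring lra.
Import GRing.Theory Num.Theory.

Lemma count_add (T : Type) (a b c : pred T) s :
  (forall x, a x = b x + c x :> nat) -> count a s = count b s + count c s.
Proof. move=> H; elim: s => //= x s ->; rewrite H; lia. Qed.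

Lemma count_ge (T : Type) (f : T -> nat) (B : seq T) (P : pred nat) m (S : seq nat) :
  uniq S ->
  (forall c, c \in S -> P c -> m <= count (fun p => f p == c) B) ->
  m * count P S <= count (fun p => (f p \in S) && P (f p)) B.
Proof.
elim: S => [|c S IH] /=; first by rewrite muln0.
move=> /andP[cS uS] H.
rewrite (@count_add _ _ (fun p => (f p == c) && P c) (fun p => (f p \in S) && P (f p))); last first.
  move=> x; rewrite in_cons; case: eqP => [->|] /=; last by case: (P _).
  by rewrite (negbTE cS) addn0.
have := IH uS (fun c' h => H c' (@mem_behead _ (c :: S) _ h)).
case Pc: (P c) => /=.
  have := H c (mem_head _ _) Pc.
  have -> : count (fun p => (f p == c) && true) B = count (fun p => f p == c) B by apply: eq_count => p; rewrite andbT.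
  lia.
have -> : count (fun p => (f p == c) && false) B = 0 by rewrite (eq_count (a2 := pred0)) ?count_pred0 // => p; rewrite andbF.
lia.
Qed.

Lemma count_proj (T : eqType) (f : T -> nat) (B : seq T) (P : pred nat) m :
  (forall c, c \in map f B -> P c -> m <= count (fun p => f p == c) B) ->
  m * count P (undup (map f B)) <= count (fun p => P (f p)) B.
Proof.
move=> H.
have -> : count (fun p => P (f p)) B = count (fun p => (f p \in undup (map f B)) && P (f p)) B.
  by apply: eq_in_count => x xB /=; rewrite mem_undup map_f.
apply: count_ge; first exact: undup_uniq.
by move=> c; rewrite mem_undup; apply: H.
Qed.

Lemma count_one (T : eqType) (f : T -> nat) (B : seq T) c :
  c \in map f B -> 1 <= count (fun p => f p == c) B.
Proof. by move=> /mapP[p pB ->]; rewrite -has_count; apply/hasP; exists p. Qed.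

Lemma count_two (T : eqType) (a b : pred T) (B : seq T) :
  (forall p, p \in B -> ~~ (a p && b p)) -> count a B + count b B <= size B.
Proof.
elim: B => //= x s IH H.
have := H x (mem_head _ _); have := IH (fun p h => H p (@mem_behead _ (x :: s) _ h)).
case: (a x); case: (b x) => //=; lia.
Qed.

Lemma arith (k hc lc hr lr cc cr N : nat) :
  (k.+1 * hc <= cc -> k.+1 * hr <= cr -> lc <= N - cc -> lr <= N - cr ->
   cc <= N -> cr <= N -> lc + lr <= N ->
  k.+1 * ((hc + lc) + (hr + lr)) <= k.+2 * N)%N.
Proof. nia. Qed.

Lemma comb (A : seq (nat * nat)) (k : nat) :
  (k.+1 * (size (proj_x (A_gt k A)) + size (proj_y (A_gt k A))) <= k.+2 * size (A_gt k A))%N.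
Proof.
set B := A_gt k A.
pose hc c := (k < count (fun p : nat * nat => p.1 == c) A)%N.
pose hr c := (k < count (fun p : nat * nat => p.2 == c) A)%N.
have memB : forall p, p \in B -> hr p.2 || hc p.1.
  by move=> p; rewrite mem_filter => /andP[].
have colB : forall c, hc c -> count (fun p => p.1 == c) B = count (fun p => p.1 == c) A.
  move=> c hcc; rewrite count_filter; apply: eq_count => p /=.
  case: eqP => //= e; apply/orP; right; move: hcc; rewrite /hc -e; done.
have rowB : forall c, hr c -> count (fun p => p.2 == c) B = count (fun p => p.2 == c) A.
  move=> c hcc; rewrite count_filter; apply: eq_count => p /=.
  case: eqP => //= e; apply/orP; left; move: hcc; rewrite /hr -e; done.
rewrite /proj_x /proj_y.
have sX := count_predC hc (undup (map fst B)).
have sY := count_predC hr (undup (map snd B)).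
have sB1 : (count (fun p : nat * nat => hc p.1) B + count (fun p : nat * nat => ~~ hc p.1) B = size B)%N := count_predC _ _.
have sB2 : (count (fun p : nat * nat => hr p.2) B + count (fun p : nat * nat => ~~ hr p.2) B = size B)%N := count_predC _ _.
have h1 : (k.+1 * count hc (undup (map fst B)) <= count (fun p : nat * nat => hc p.1) B)%N.
  by apply: count_proj => c _ h; rewrite colB.
have h2 : (k.+1 * count hr (undup (map snd B)) <= count (fun p : nat * nat => hr p.2) B)%N.
  by apply: count_proj => c _ h; rewrite rowB.
have h3 : (count (predC hc) (undup (map fst B)) <= count (fun p : nat * nat => ~~ hc p.1) B)%N.
  by rewrite -[X in (X <= _)%N]mul1n; apply: count_proj => c h _; apply: count_one.
have h4 : (count (predC hr) (undup (map snd B)) <= count (fun p : nat * nat => ~~ hr p.2) B)%N.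
  by rewrite -[X in (X <= _)%N]mul1n; apply: count_proj => c h _; apply: count_one.
have h5 : (count (fun p : nat * nat => ~~ hc p.1) B + count (fun p : nat * nat => ~~ hr p.2) B <= size B)%N.
  by apply: count_two => p h; have := memB p h; case: (hc _); case: (hr _).
rewrite -sX -sY.
move: h1 h2 h3 h4 h5 sB1 sB2.
generalize (count (fun p : nat * nat => hc p.1) B) (count (fun p : nat * nat => hr p.2) B)
  (count (fun p : nat * nat => ~~ hc p.1) B) (count (fun p : nat * nat => ~~ hr p.2) B)
  (count hc (undup (map fst B))) (count hr (undup (map snd B)))
  (count (predC hc) (undup (map fst B))) (count (predC hr) (undup (map snd B))) (size B).
move=> *; nia.
Qed.

Local Open Scope ring_scope.
Lemma fin (a b N k : nat) :
  ((k.+1) * (a + b) <= k.+2 * N)%N ->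
  (a%:R + b%:R : rat) <= (1 + 1 / (k.+1)%:R) * N%:R.
Proof.
move=> H.
have K0 : 1 + k%:R != 0 :> rat by rewrite addrC natr1 pnatr_eq0.
have E1 : (1 + 1 / (k.+1)%:R) * N%:R = ((k.+2 * N)%N)%:R / (k.+1)%:R :> rat.
  by rewrite natrM -(addn1 k.+1) natrD; field.
have E2 : a%:R + b%:R = ((k.+1 * (a + b))%N)%:R / (k.+1)%:R :> rat.
  by rewrite natrM natrD; field.
by rewrite E1 E2 ler_pM2r ?invr_gt0 ?ltr0n // ler_nat.
Qed.

Theorem mainTheorem13 (A : seq (nat * nat)) (k : nat) (hA : uniq A) :
  ((size (proj_x (A_gt k A)))%:R + (size (proj_y (A_gt k A)))%:R : rat)
    <= (1 + 1 / (k.+1)%:R) * (size (A_gt k A))%:R.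
Proof. exact: fin (comb A k). Qed.
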